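(* Let $F$ be a random forest and $L$ a bi-stable labelling of its explanation BAG $\mathcal{B}_F$, and let $S_L=S_{1,j_1}\times\dots\times S_{k,j_k}$ where, for each feature $X_i$, $A_{X_i\in S_{i,j_i}}$ is the feature argument of $X_i$ labelled $\mathrm{in}$ by $L$. Then for every tree $T\in F$ and every rule $r\in T$, $L(A_{T,r})=\mathrm{in}$ if and only if $r$ is the active rule in $T$ for all inputs $x\in S_L$. Furthermore, all rule arguments $A_{T,r'}$ of $T$ other than the one labelled $\mathrm{in}$ are labelled $\mathrm{out}$.
   Context: Features $X_1,\dots,X_k$ have domains $D_1,\dots,D_k$; each feature is categorical (finite domain) or numerical ($D_i\subseteq\mathbb{R}$). Inputs are $x\in D_1\times\dots\times D_k$; $\mathcal{C}$ is a finite set of class labels. Feature conditions are $X_i=v$ (categorical) or $X_i\le v$ (numerical); a feature literal is a condition or its negation. A rule $r$ is $\mathrm{prem}(r)\rightarrow\mathrm{conc}(r)$ with $\mathrm{prem}(r)$ a finite set of feature literals and $\mathrm{conc}(r)\in\mathcal{C}$. A decision tree $T$ is a finite set of rules such that every input satisfies the premise of exactly one rule of $T$, the active rule in $T$ for $x$. A random forest $F$ is a finite set of decision trees. Domain partition: for a categorical feature, the singletons $\{v\}$, $v\in D_i$; for a numerical feature with distinct thresholds $v_1<\dots<v_m$ occurring in conditions $X_i\le v$ in $F$, the sets $D_i\cap(-\infty,v_1]$, $D_i\cap(v_{j-1},v_j]$ ($2\le j\le m$), $D_i\cap(v_m,\infty)$; denote them $S_{i,1},\dots,S_{i,n_i}$.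 A BAG is $(\mathcal{A},\mathrm{Att},\mathrm{Sup})$ with $\mathcal{A}$ finite and $\mathrm{Att},\mathrm{Sup}\subseteq\mathcal{A}\times\mathcal{A}$; $\mathrm{Att}(A)=\{B:(B,A)\in\mathrm{Att}\}$, $\mathrm{Sup}(A)=\{B:(B,A)\in\mathrm{Sup}\}$. A labelling is a map $L:\mathcal{A}\to\{\mathrm{in},\mathrm{out},\mathrm{und}\}$. The attackers of $A$ dominate its supporters if $|\{B\in\mathrm{Att}(A):L(B)=\mathrm{in}\}|>|\{B\in\mathrm{Sup}(A):L(B)\ne\mathrm{out}\}|$; the supporters dominate the attackers if $|\{B\in\mathrm{Sup}(A):L(B)=\mathrm{in}\}|>|\{B\in\mathrm{Att}(A):L(B)\ne\mathrm{out}\}|$. $L$ is bi-complete if for every $A$: $L(A)=\mathrm{in}$ iff ($L(B)=\mathrm{out}$ for all $B\in\mathrm{Att}(A)$ or $A$'s supporters dominate its attackers), and $L(A)=\mathrm{out}$ iff $A$'s attackers dominate its supporters. $L$ is bi-stable if it is bi-complete and labels nothing $\mathrm{und}$ (a bi-stable labelling of $\mathcal{B}_F$ labels exactly one feature argument of each feature $\mathrm{in}$). The explanation BAG $\mathcal{B}_F$ has arguments: a class argument $A_y$ for each $y\in\mathcal{C}$; a rule argument $A_{T,r}$ for each $T\in F$, $r\in T$ (the rule arguments of $T$); a feature argument $A_{X_i\in S_{i,j}}$ for each feature $i$ and partition set $S_{i,j}$. Attacks: between any two distinct feature arguments of the same feature; from $A_{X_i\in S_{i,j}}$ to $A_{T,r}$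 whenever some literal in $\mathrm{prem}(r)$ is satisfied by no value in $S_{i,j}$; from $A_{T,r}$ to $A_y$ whenever $\mathrm{conc}(r)\ne y$. Supports: from $A_{T,r}$ to $A_y$ whenever $\mathrm{conc}(r)=y$. No other attacks or supports. *)

(* Defs.v *)
From HB Require Import structures.
From mathcomp Require Import all_boot all_order all_algebra.
From mathcomp Require Import boolp reals.
From Stdlib Require List.
Set Implicit Arguments. Unset Strict Implicit. Unset Printing Implicit Defensive.
Import Order.TTheory GRing.Theory Num.Theory.
Local Open Scope ring_scope.

Inductive label := lin | lout | lund.
Definition is_in (l : label) : bool := if l is lin then true else false.
Definition is_out (l : label) : bool := if l is lout then true else false.

Section RF.
(* k features X_0..X_{k-1}; categorical values live in CV, numerical in R. *)
Variables (k : nat) (CV : eqType) (R : realType) (Cl : finType).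
(* numeric i = true iff feature i is numerical;
   Dc i = the (finite) domain of a categorical feature i;
   Dn i = the domain (subset of R) of a numerical feature i. *)
Variables (numeric : 'I_k -> bool) (Dc : 'I_k -> seq CV) (Dn : 'I_k -> R -> Prop).

Definition Val := (CV + R)%type.

Definition Dom (i : 'I_k) (w : Val) : Prop :=
  if numeric i then exists r, w = inr r /\ Dn i r
  else exists v, w = inl v /\ v \in Dc i.

Definition input (x : 'I_k -> Val) : Prop := forall i, Dom i (x i).

(* feature conditions: inl (i, v) is "X_i = v", inr (i, v) is "X_i <= v" *)
Definition cond := (('I_k * CV) + ('I_k * R))%type.
(* feature literal: (c, true) is c, (c, false) is the negation of c *)
Definition literal := (cond * bool)%type.
Definition rule := (seq literal * Cl)%type.
Definition prem (r : rule) : seq literal := r.1.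
Definition conc (r : rule) : Cl := r.2.
Definition tree := seq rule.
Definition forest := seq tree.

Definition cond_feat (c : cond) : 'I_k :=
  match c with inl (i, _) => i | inr (i, _) => i end.
Definition lit_feat (l : literal) : 'I_k := cond_feat l.1.

Definition wt_cond (c : cond) : bool :=
  match c with inl (i, _) => ~~ numeric i | inr (i, _) => numeric i end.

Definition cond_sat_val (c : cond) (w : Val) : Prop :=
  match c with
  | inl (_, v) => w = inl v
  | inr (_, v) => exists r, w = inr r /\ r <= v
  end.
Definition lit_sat_val (l : literal) (w : Val) : Prop :=
  if l.2 then cond_sat_val l.1 w else ~ cond_sat_val l.1 w.

Definition lit_sat (l : literal) (x : 'I_k -> Val) : Prop :=
  lit_sat_val l (x (lit_feat l)).
Definition prem_sat (r : rule) (x : 'I_k -> Val) : Prop :=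
  forall l, l \in prem r -> lit_sat l x.

Definition is_tree (T : tree) : Prop :=
  uniq T /\ forall x, input x -> exists! r, r \in T /\ prem_sat r x.

Definition active (T : tree) (x : 'I_k -> Val) (r : rule) : Prop :=
  r \in T /\ prem_sat r x.

Definition is_forest (F : forest) : Prop :=
  uniq F /\ (forall T, T \in F -> is_tree T) /\
  (forall T r l, T \in F -> r \in T -> l \in prem r -> wt_cond l.1).

Section Partition.
Variable F : forest.

Definition lits : seq literal := flatten [seq flatten [seq prem r | r <- T] | T <- F].

Definition thresholds (i : 'I_k) : seq R :=
  sort <=%R (undup (pmap (fun l : literal =>
    match l.1 with inr (i', v) => if i' == i then Some v else None
                 | inl _ => None end) lits)).

(* r lies in the j-th interval (-oo,v_1], (v_1,v_2], ..., (v_m,+oo) *)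
Definition in_interval (th : seq R) (j : nat) (r : R) : bool :=
  (if j == 0%N then true else nth 0 th j.-1 < r) &&
  (if j == size th then true else r <= nth 0 th j).

(* The domain partition S_{i,0}, ..., S_{i,n_i - 1} of feature i (indices
   start at 0).  Being a partition, only the nonempty blocks are kept. *)
Definition parts (i : 'I_k) : seq (Val -> Prop) :=
  if numeric i then
    [seq P <- [seq (fun w : Val => exists r, w = inr r /\ Dn i r /\
                       in_interval (thresholds i) jj r)
              | jj <- iota 0 (size (thresholds i)).+1]
     | `[< exists w, P w >]]
  else [seq (fun w : Val => w = inl v) | v <- undup (Dc i)].

Definition npart (i : 'I_k) : nat := size (parts i).
Definition S (i : 'I_k) (j : nat) : Val -> Prop := nth (fun _ => False) (parts i) j.

Inductive arg :=
  | AClass of Cl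
  | ARule of tree & rule
  | AFeat of 'I_k & nat.

Definition args : seq arg :=
  [seq AClass y | y <- enum Cl] ++
  flatten [seq [seq ARule T r | r <- T] | T <- F] ++
  flatten [seq [seq AFeat i j | j <- iota 0 (npart i)] | i <- enum 'I_k].

Definition att (B A : arg) : Prop :=
  match B, A with
  | AFeat i j, AFeat i' j' => i = i' /\ j <> j'
  | AFeat i j, ARule T r =>
      exists l, l \in prem r /\ lit_feat l = i /\
                forall w, S i j w -> ~ lit_sat_val l w
  | ARule T r, AClass y => conc r <> y
  | _, _ => False
  end.

Definition sup (B A : arg) : Prop :=
  match B, A with
  | ARule T r, AClass y => conc r = y
  | _, _ => False
  end.

Section Labelling.
Variable L : arg -> label.

Definition att_in A := count (fun B => `[< att B A >] && is_in (L B)) args.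
Definition att_notout A := count (fun B => `[< att B A >] && ~~ is_out (L B)) args.
Definition sup_in A := count (fun B => `[< sup B A >] && is_in (L B)) args.
Definition sup_notout A := count (fun B => `[< sup B A >] && ~~ is_out (L B)) args.

Definition att_dominate A : Prop := (sup_notout A < att_in A)%N.
Definition sup_dominate A : Prop := (att_notout A < sup_in A)%N.

Definition bi_complete : Prop :=
  forall A, List.In A args ->
    (L A = lin <-> ((forall B, List.In B args -> att B A -> L B = lout)
                    \/ sup_dominate A)) /\
    (L A = lout <-> att_dominate A).

Definition bi_stable : Prop :=
  bi_complete /\ forall A, List.In A args -> L A <> lund.

End Labelling.
End Partition.
End RF.

Arguments AClass {k CV R Cl}.
Arguments ARule {k CV R Cl}.
Arguments AFeat {k CV R Cl}.

(* Main.v *)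
Require Import Defs.
From HB Require Import structures.
From mathcomp Require Import all_boot all_order all_algebra.
From mathcomp Require Import boolp reals.
From Stdlib Require List.
Set Implicit Arguments. Unset Strict Implicit. Unset Printing Implicit Defensive.
Import Order.TTheory GRing.Theory Num.Theory.
Local Open Scope ring_scope.

Lemma In_memE (T : eqType) (x : T) (s : seq T) : List.In x s <-> x \in s.
Proof.
elim: s => [|y s IH] /=; first by split.
rewrite in_cons; split.
- by case=> [->|/IH ->]; rewrite ?eqxx ?orbT.
- by case/orP=> [/eqP->|/IH]; [left|right].
Qed.

Lemma In_map (A B : Type) (f : A -> B) (s : seq A) y :
  List.In y (map f s) <-> exists x, List.In x s /\ y = f x.
Proof.
elim: s => [|x s IH] /=; first by split=> // [[x []]].
split.
- case=> [<-|/IH [z [Hz ->]]]; first by exists x; auto.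
  by exists z; auto.
- case=> z [[<-|Hz] Hy]; first by left; rewrite Hy.
  by right; apply/IH; exists z.
Qed.

Lemma In_cat (A : Type) (s1 s2 : seq A) y :
  List.In y (s1 ++ s2) <-> List.In y s1 \/ List.In y s2.
Proof.
elim: s1 => [|x s IH] /=; first by split; [right|case].
rewrite IH; tauto.
Qed.

Lemma In_flatten (A : Type) (ss : seq (seq A)) y :
  List.In y (flatten ss) <-> exists s, List.In s ss /\ List.In y s.
Proof.
elim: ss => [|s ss IH] /=; first by split=> // [[s []]].
rewrite In_cat IH; split.
- by case=> [H|[t [Ht Hy]]]; [exists s|exists t]; auto.
- by case=> t [[<-|Ht] Hy]; [left|right; exists t].
Qed.

Lemma In_filter (A : Type) (p : pred A) (s : seq A) y :
  List.In y (filter p s) <-> List.In y s /\ p y.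
Proof.
elim: s => [|x s IH] /=; first by split=> // [[]].
case: ifP => px /=; rewrite IH; split.
- by case=> [<-|[]]; auto.
- by case=> [[<-|H] py]; auto.
- by case; auto.
- by case=> [[<-|H] py]; [rewrite px in py|].
Qed.

Lemma In_nth (A : Type) (d : A) (s : seq A) n :
  (n < size s)%N -> List.In (nth d s n) s.
Proof.
elim: s n => [|x s IH] [|n] //= H; first by left.
by right; apply: IH.
Qed.

Lemma count_pos (A : Type) (p : pred A) (s : seq A) :
  (0 < count p s)%N <-> exists x, List.In x s /\ p x.
Proof.
elim: s => [|x s IH] /=; first by split=> // [[x []]].
case px: (p x) => /=.
- by split=> // _; exists x; auto.
- rewrite add0n IH; split.
  + by case=> y [Hy py]; exists y; auto.
  + by case=> y [[<-|Hy] py]; [rewrite px in py|exists y].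
Qed.

Lemma interval_le (R : realType) (th : seq R) jj r p :
  sorted <=%R th -> (jj <= size th)%N -> (p < size th)%N ->
  in_interval th jj r -> (r <= nth 0 th p) = (jj <= p)%N.
Proof.
move=> so hj hp /andP [h1 h2].
have hom := sorted_leq_nth (@le_trans _ R) (@lexx _ R) 0 so.
case: (leqP jj p) => hjp.
- have hjs : jj != size th by rewrite neq_ltn (leq_ltn_trans hjp hp).
  rewrite (negPf hjs) in h2.
  apply: (le_trans h2); apply: hom => //; rewrite inE //.
  exact: leq_ltn_trans hjp hp.
- have hj0 : jj != 0%N by rewrite -lt0n (leq_ltn_trans _ hjp).
  rewrite (negPf hj0) in h1.
  have h3 : (jj.-1 < size th)%N by rewrite prednK ?lt0n.
  have h4 : (p <= jj.-1)%N by rewrite -ltnS prednK ?lt0n.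
  apply/negbTE; rewrite -ltNge; apply: le_lt_trans h1.
  by apply: hom; rewrite ?inE.
Qed.

Section Proof.
Variables (k : nat) (CV : eqType) (R : realType) (Cl : finType).
Variables (numeric : 'I_k -> bool) (Dc : 'I_k -> seq CV) (Dn : 'I_k -> R -> Prop).
Variable F : forest k CV R Cl.
Hypothesis HF : is_forest numeric Dc Dn F.
Variable L : arg k CV R Cl -> label.
Hypothesis HL : bi_stable numeric Dc Dn F L.
Variable j : 'I_k -> nat.
Hypothesis Hj : forall i, (j i < npart numeric Dc Dn F i)%N /\ L (AFeat i (j i)) = lin.

Local Notation args := (Defs.args numeric Dc Dn F).
Local Notation S := (Defs.S numeric Dc Dn F).
Local Notation npart := (Defs.npart numeric Dc Dn F).
Local Notation sup_in := (Defs.sup_in numeric Dc Dn F).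
Local Notation sup_notout := (Defs.sup_notout numeric Dc Dn F).
Local Notation att_dominate := (Defs.att_dominate numeric Dc Dn F).
Local Notation sup_dominate := (Defs.sup_dominate numeric Dc Dn F).

Lemma In_feat i jj : (jj < npart i)%N -> List.In (AFeat i jj) args.
Proof.
move=> H; rewrite /Defs.args !In_cat; right; right.
apply/In_flatten; exists [seq AFeat i j0 | j0 <- iota 0 (npart i)]; split.
- by apply/In_map; exists i; split => //; apply/In_memE; rewrite mem_enum.
- by apply/In_map; exists jj; split => //; apply/In_memE; rewrite mem_iota.
Qed.

Lemma In_rule T r : T \in F -> r \in T -> List.In (ARule T r) args.
Proof.
move=> HT Hr; rewrite /Defs.args !In_cat; right; left.
apply/In_flatten; exists [seq ARule T r0 | r0 <- T]; split.
- by apply/In_map; exists T; split => //; apply/In_memE.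
- by apply/In_map; exists r; split => //; apply/In_memE.
Qed.

Lemma sup_zero A : (forall B, ~ Defs.sup B A) ->
  sup_in L A = 0%N /\ sup_notout L A = 0%N.
Proof.
move=> H; split; apply/eqP; rewrite -leqn0 leqNgt; apply/negP;
  case/count_pos => B [_ /andP [/asboolP HB _]]; exact: H HB.
Qed.

Lemma notund A : List.In A args -> L A <> lund.
Proof. exact: HL.2. Qed.

Lemma feat_out i jj : List.In (AFeat i jj) args -> jj <> j i ->
  L (AFeat i jj) = lout.
Proof.
move=> Hin Hne; apply/((HL.1 _ Hin).2).
have [_ s1] := sup_zero (A := AFeat i jj) (ltac:(by move=> [?|? ?|? ?] [])).
rewrite /Defs.att_dominate s1.
apply/count_pos; exists (AFeat i (j i)); split; first exact: In_feat (Hj i).1.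
rewrite (Hj i).2 andbT; apply/asboolP => /=; split => //; exact: nesym.
Qed.

Lemma feat_in i jj : List.In (AFeat i jj) args -> L (AFeat i jj) = lin ->
  jj = j i.
Proof.
move=> Hin HL'; case: (eqVneq jj (j i)) => [//|/eqP Hne].
by rewrite feat_out in HL'.
Qed.

Lemma rule_char T r : T \in F -> r \in T ->
  (L (ARule T r) = lin <-> forall l, l \in prem r ->
     exists w, S (lit_feat l) (j (lit_feat l)) w /\ lit_sat_val l w).
Proof.
move=> HT Hr; have Hin := In_rule HT Hr.
have [s0 s1] := sup_zero (A := ARule T r) (ltac:(by move=> [?|? ?|? ?] [])).
rewrite (HL.1 _ Hin).1 /sup_dominate s0 ltn0; split.
- case=> // Hatt l Hl; apply: contrapT => Hno.
  have := Hatt (AFeat (lit_feat l) (j (lit_feat l))) (In_feat (Hj _).1).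
  rewrite (Hj _).2 => H; suff: lin = lout by [].
  apply: H; exists l; split => //; split => // w Hw Hs; apply: Hno; by exists w.
- move=> Hw; left => -[y|T' r'|i jj] HB //= [l [Hl [Hi Hnot]]].
  case HLB: (L (AFeat i jj)) => //; last by exfalso; exact: notund HB HLB.
  have ejj := feat_in HB HLB; subst jj i.
  by have [w [Sw Hsat]] := Hw l Hl; exfalso; exact: Hnot w Sw Hsat.
Qed.


Local Notation parts := (Defs.parts numeric Dc Dn F).
Local Notation th := (Defs.thresholds F).

Lemma parts_desc i P : List.In P (parts i) ->
  (numeric i /\ exists jj, (jj <= size (th i))%N /\ (exists w, P w) /\
      P = (fun w : Val CV R => exists r, w = inr r /\ Dn i r /\ in_interval (th i) jj r))
  \/ (~~ numeric i /\ exists v, v \in Dc i /\ P = (fun w : Val CV R => w = inl v)).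
Proof.
rewrite /Defs.parts; case: ifP => Hn.
- case/In_filter => /In_map [jj [Hjj ->]] /asboolP Hne; left; split => //.
  exists jj; split => //; move/In_memE: Hjj; rewrite mem_iota add0n ltnS; by case/andP.
- case/In_map => v [/In_memE Hv ->]; right; split; first exact: negbT.
  by exists v; rewrite mem_undup in Hv.
Qed.

Lemma block_desc i : List.In (S i (j i)) (parts i).
Proof. exact: In_nth (Hj i).1. Qed.

Lemma block_ne i : exists w, S i (j i) w.
Proof.
case: (parts_desc (block_desc i)) => [[_ [jj [_ [H _]]]]|[_ [v [_ ->]]]] //.
by exists (inl v).
Qed.

Lemma block_dom i w : S i (j i) w -> Dom numeric Dc Dn i w.
Proof.
rewrite /Dom; case: (parts_desc (block_desc i)) => [[Hn [jj [_ [_ ->]]]]|[Hn [v [Hv ->]]]].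
- by rewrite Hn => -[r [-> [Hr _]]]; exists r.
- by rewrite (negPf Hn) => ->; exists v.
Qed.

Lemma block_const T r l : T \in F -> r \in T -> l \in prem r ->
  forall w1 w2, S (lit_feat l) (j (lit_feat l)) w1 ->
    S (lit_feat l) (j (lit_feat l)) w2 -> lit_sat_val l w1 -> lit_sat_val l w2.
Proof.
move=> HT Hr Hl; have Hwt := HF.2.2 T r l HT Hr Hl.
have Hlits : l \in lits F.
  by apply/flatten_mapP; exists T => //; apply/flatten_mapP; exists r.
move: Hl Hwt Hlits; case: l => [[[i v]|[i v]] b] Hl /= Hwt Hlits;
  rewrite /lit_feat /=.
- case: (parts_desc (block_desc i)) => [[Hn _]|[_ [v0 [_ ->]]]].
  + by rewrite Hn in Hwt.
  + by move=> w1 w2 -> ->.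
- case: (parts_desc (block_desc i)) => [[_ [jj [Hjj [_ ->]]]]|[Hn _]]; last first.
  + by rewrite Hwt in Hn.
  have Hv : v \in th i.
    rewrite /Defs.thresholds mem_sort mem_undup mem_pmap.
    by apply/mapP; exists (inr (i, v), b) => //=; rewrite eqxx.
  have Hp : (index v (th i) < size (th i))%N by rewrite index_mem.
  have so : sorted <=%R (th i) by apply: sort_sorted; exact: le_total.
  have key : forall w : Val CV R, (exists r, w = inr r /\ Dn i r /\ in_interval (th i) jj r) ->
      (cond_sat_val (inr (i, v)) w <-> (jj <= index v (th i))%N).
    move=> w [r0 [-> [_ Hint]]] /=.
    rewrite -(interval_le so Hjj Hp Hint) (nth_index _ Hv).
    split; first by case=> r1 [[->]].
    by move=> H; exists r0.
  move=> w1 w2 H1 H2; have := key _ H1; have := key _ H2.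
  rewrite /lit_sat_val; case: b {Hl Hlits} => /=; tauto.
Qed.

Lemma SL_exists : exists x : 'I_k -> Val CV R, forall i, S i (j i) (x i).
Proof. have [f Hf] := @boolp.choice _ _ (fun i w => S i (j i) w) block_ne; by exists f. Qed.

Lemma main T : T \in F ->
    (forall r, r \in T -> (L (ARule T r) = lin <->
       forall x, (forall i, S i (j i) (x i)) -> active T x r)) /\
    (exists r, r \in T /\ L (ARule T r) = lin /\
       forall r', r' \in T -> r' <> r -> L (ARule T r') = lout).
Proof.
move=> HT.
have P1 : forall r, r \in T -> (L (ARule T r) = lin <->
       forall x, (forall i, S i (j i) (x i)) -> active T x r).
  move=> r Hr; rewrite (rule_char HT Hr); split.
  - move=> H x Hx; split => // l Hl.
    have [w [Sw Hw]] := H l Hl.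
    exact: (block_const HT Hr Hl Sw (Hx _) Hw).
  - move=> H l Hl; have [x0 Hx0] := SL_exists.
    by exists (x0 (lit_feat l)); split => //; exact: (H x0 Hx0).2 l Hl.
split => //.
have [x0 Hx0] := SL_exists.
have Hinp : input numeric Dc Dn x0 by move=> i; exact: block_dom (Hx0 i).
have [_ Htree] := HF.2.1 T HT.
have [r0 [[Hr0 Hp0] Huniq]] := Htree x0 Hinp.
have Hl0 : L (ARule T r0) = lin.
  apply/(P1 r0 Hr0) => x Hx; split => // l Hl.
  exact: (block_const HT Hr0 Hl (Hx0 _) (Hx _) (Hp0 l Hl)).
exists r0; split => //; split => // r' Hr' Hne.
case HLr: (L (ARule T r')) => //.
- exfalso; apply: Hne; apply: esym; apply: Huniq.
  by have := (P1 r' Hr').1 HLr x0 Hx0.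
- by exfalso; exact: notund (In_rule HT Hr') HLr.
Qed.

End Proof.

Theorem lemma2 (k : nat) (CV : eqType) (R : realType) (Cl : finType)
  (numeric : 'I_k -> bool) (Dc : 'I_k -> seq CV) (Dn : 'I_k -> R -> Prop)
  (F : forest k CV R Cl)
  (HF : is_forest numeric Dc Dn F)
  (L : arg k CV R Cl -> label)
  (HL : bi_stable numeric Dc Dn F L)
  (j : 'I_k -> nat)
  (Hj : forall i, (j i < npart numeric Dc Dn F i)%N /\ L (AFeat i (j i)) = lin) :
  let S_L := fun x : 'I_k -> Val CV R => forall i, S numeric Dc Dn F i (j i) (x i) in
  forall T, T \in F ->
    (forall r, r \in T -> (L (ARule T r) = lin <-> forall x, S_L x -> active T x r)) /\
    (exists r, r \in T /\ L (ARule T r) = lin /\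
       forall r', r' \in T -> r' <> r -> L (ARule T r') = lout).
Proof.
move=> S_L T HT; exact: (main HF HL Hj HT).
Qed.
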